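(* Let $\vec v$ be a list of variables, $X,Y$ expectations, and let $S_C$ be the HeyVL encoding of the specification statement $[\vec v](X,Y)$, namely $S_C=\mathtt{assert}\ X;\ \mathtt{havoc}\ \vec v;\ \mathtt{validate};\ \mathtt{assume}\ Y$. Let $X',Y'$ be expectations. (1) If $S'$ is a minimal error-witnessing slice of $S_C$ w.r.t. $(X',Y')$ which contains $\mathtt{assert}\ X$, then $X'(\sigma')\not\le X(\sigma')$ for some state $\sigma'$. (2) If $S'$ is a verification-witnessing slice of $S_C$ w.r.t. $(X',Y')$ with $\models\{X'\}S'\{Y'\}$ which does not contain $\mathtt{assume}\ Y$, then $X'\preceq Y'$.
   Context: Expectations are functions from program states to $[0,\infty]$, ordered pointwise by $\preceq$. HeyVL verification pre-expectations: $\mathrm{vp}[S_1;S_2](Z)=\mathrm{vp}[S_1](\mathrm{vp}[S_2](Z))$; $\mathrm{vp}[\mathtt{assert}\ X](Z)=\min(X,Z)$; $\mathrm{vp}[\mathtt{havoc}\ \vec v](Z)$ is the pointwise infimum of $Z$ over all values of $\vec v$; $\mathrm{vp}[\mathtt{validate}](Z)$ is $\infty$ where $Z=\infty$ and $0$ elsewhere; $\mathrm{vp}[\mathtt{assume}\ Y](Z)$ is $\infty$ where $Y\le Z$ and $Z$ elsewhere; $\mathrm{vp}[\mathtt{skip}](Z)=Z$. Subprograms of $S_C$ are obtained by removing (replacing by $\mathtt{skip}$) some of its four statements. Write $\sigma\models\{A\}S\{B\}$ iff $A(\sigma)\le\mathrm{vp}[S](B)(\sigma)$ and $\models\{A\}S\{B\}$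 iff this holds for all $\sigma$. A subprogram $P$ of $S$ is an error-witnessing slice w.r.t. $(A,B)$ if $\not\models\{A\}P\{B\}$ and every state $\sigma'$ with $\sigma'\not\models\{A\}P\{B\}$ satisfies $\sigma'\not\models\{A\}S\{B\}$; it is minimal if no proper subprogram of it is also such a slice. $P$ is a verification-witnessing slice w.r.t. $(A,B)$ if $\models\{A\}P\{B\}$ implies $\models\{A\}S\{B\}$. *)

(* Defs.v *)
From HB Require Import structures.
From mathcomp Require Import all_boot all_order all_algebra.
From mathcomp Require Import boolp classical_sets reals constructive_ereal ereal.
Set Implicit Arguments. Unset Strict Implicit. Unset Printing Implicit Defensive.
Import Order.TTheory GRing.Theory Num.Theory.
Local Open Scope classical_set_scope.
Local Open Scope ereal_scope.

Section HeyVL.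
Variables (R : realType) (Var : eqType) (Val : Type).

Definition state := Var -> Val.
(* expectations: functions from states to \bar R (meant nonnegative) *)
Definition expect := state -> \bar R.

Definition nonneg_exp (X : expect) : Prop := forall s, 0 <= X s.

Definition exp_le (X Y : expect) : Prop := forall s, X s <= Y s.

Inductive stmt :=
| SAssert of expect
| SHavoc of seq Var
| SValidate
| SAssume of expect
| SSkip.

Definition havoc_set (vs : seq Var) (s : state) : set state :=
  [set s' | forall x, x \notin vs -> s' x = s x].

Definition vp_stmt (c : stmt) (Z : expect) : expect :=
  match c with
  | SAssert X => fun s => Order.min (X s) (Z s)
  | SHavoc vs => fun s => ereal_inf (Z @` havoc_set vs s)
  | SValidate => fun s => if Z s == +oo then +oo else 0
  | SAssume Y => fun s => if Y s <= Z s then +oo else Z s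
  | SSkip => Z
  end.

Definition vp (P : seq stmt) (Z : expect) : expect := foldr vp_stmt Z P.

Definition holds_at (A : expect) (P : seq stmt) (B : expect) (s : state) : Prop :=
  A s <= vp P B s.

Definition valid (A : expect) (P : seq stmt) (B : expect) : Prop :=
  forall s, holds_at A P B s.

(* Subprograms of S_C: each of the four statements is kept (true) or
   replaced by skip (false). A mask is (assert, havoc, validate, assume). *)
Definition mask4 := (bool * bool * bool * bool)%type.

Definition keep (b : bool) (c : stmt) : stmt := if b then c else SSkip.

Definition SC_sub (m : mask4) (X : expect) (vs : seq Var) (Y : expect) : seq stmt :=
  let: (a, h, w, y) := m in
  [:: keep a (SAssert X); keep h (SHavoc vs); keep w SValidate; keep y (SAssume Y)].

Definition full_mask : mask4 := (true, true, true, true).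

Definition SC (X : expect) (vs : seq Var) (Y : expect) : seq stmt :=
  SC_sub full_mask X vs Y.

Definition mask_le (m' m : mask4) : bool :=
  let: (a', h', w', y') := m' in
  let: (a, h, w, y) := m in
  [&& a' ==> a, h' ==> h, w' ==> w & y' ==> y].

Definition error_witnessing (P S : seq stmt) (A B : expect) : Prop :=
  ~ valid A P B /\
  forall s', ~ holds_at A P B s' -> ~ holds_at A S B s'.

Definition minimal_error_witnessing (m : mask4) (X : expect) (vs : seq Var)
    (Y A B : expect) : Prop :=
  error_witnessing (SC_sub m X vs Y) (SC X vs Y) A B /\
  forall m', mask_le m' m -> m' != m ->
    ~ error_witnessing (SC_sub m' X vs Y) (SC X vs Y) A B.

Definition verification_witnessing (P S : seq stmt) (A B : expect) : Prop :=
  valid A P B -> valid A S B.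

Definition contains_assert (m : mask4) : bool := m.1.1.1.
Definition contains_assume (m : mask4) : bool := m.2.

End HeyVL.

(* Main.v *)
Require Import Defs.
From HB Require Import structures.
From mathcomp Require Import all_boot all_order all_algebra.
From mathcomp Require Import boolp classical_sets reals constructive_ereal ereal.
Import Order.TTheory GRing.Theory Num.Theory.
Local Open Scope ereal_scope.

Lemma step_le (R : realType) (Var : eqType) (Val : Type) (X : expect R Var Val)
  (vs : seq Var) (c : stmt R Var Val) (Z : expect R Var Val) :
  nonneg_exp X -> nonneg_exp Z ->
  (c = (SSkip _ _ _) \/ c = SAssert X \/ c = SHavoc R Val vs \/ c = SValidate R Var Val) ->
  nonneg_exp (vp_stmt c Z) /\ exp_le (vp_stmt c Z) Z.
Proof.
move=> HX HZ [->|[->|[->|->]]] /=; split => s //.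
- by rewrite le_min HX HZ.
- by rewrite ge_min lexx orbT.
- apply: le_ereal_inf_tmp => _ [t _ <-]; exact: HZ.
- apply: ereal_inf_lbound; exists s => //.
- by case: ifP.
- case: ifP => [/eqP -> //|_]; exact: HZ.
Qed.

Theorem theorem5 (R : realType) (Var : eqType) (Val : Type)
  (vs : seq Var) (X Y X' Y' : expect R Var Val) :
  nonneg_exp X -> nonneg_exp Y -> nonneg_exp X' -> nonneg_exp Y' ->
  (* (1) *)
  (forall m : mask4,
     minimal_error_witnessing m X vs Y X' Y' ->
     contains_assert m ->
     exists s', ~ (X' s' <= X s')) /\
  (* (2) *)
  (forall m : mask4,
     verification_witnessing (SC_sub m X vs Y) (SC X vs Y) X' Y' ->
     valid X' (SC_sub m X vs Y) Y' ->
     ~~ contains_assume m ->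
     exp_le X' Y').
Proof.
move=> HX HY HX' HY'; split.
- move=> [[[a h] w] y] [[Hnv Hew] Hmin] /=; case: a Hnv Hew Hmin => // Hnv Hew Hmin _.
  case: (pselect (exists s', ~ X' s' <= X s')) => // H; exfalso.
  have HXX s : X' s <= X s.
    by apply: contrapT => nH; apply: H; exists s.
  apply: (Hmin (false, h, w, y)).
  + by rewrite /mask_le /= !implybb.
  + by [].
  set T := vp [:: keep h (SHavoc R Val vs); keep w (SValidate R Var Val);
                 keep y (SAssume Y)] Y'.
  have E1 s : holds_at X' (SC_sub (true, h, w, y) X vs Y) Y' s <-> X' s <= T s.
    rewrite /holds_at /= le_min HXX /=; done.
  have E2 s : holds_at X' (SC_sub (false, h, w, y) X vs Y) Y' s <-> X' s <= T s.
    by rewrite /holds_at.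
  split.
  + move=> Hv; apply: Hnv => s; apply/E1/E2; exact: Hv.
  + move=> s Hn; apply: Hew => /E1 /E2; exact: Hn.
- move=> [[[a h] w] y] _ Hv /=; case: y Hv => // Hv _ s.
  apply: (le_trans (Hv s)); rewrite /vp /=.
  have K : forall (b : bool) c, (c = (SSkip _ _ _) \/ c = SAssert X \/ c = SHavoc R Val vs
        \/ c = SValidate R Var Val) -> (keep b c = (SSkip _ _ _) \/ keep b c = SAssert X \/
        keep b c = SHavoc R Val vs \/ keep b c = SValidate R Var Val).
    by move=> [] c Hc //=; left.
  have [N1 L1] := @step_le _ _ _ X vs _ Y' HX HY' (or_introl erefl).
  have [N2 L2] := @step_le _ _ _ X vs _ ( vp_stmt (SSkip _ _ _) Y') HX N1
                   (K w _ (or_intror (or_intror (or_intror erefl)))).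
  have [N3 L3] := @step_le _ _ _ X vs _ ( vp_stmt (keep w (SValidate R Var Val)) (vp_stmt (SSkip _ _ _) Y')) HX N2
                   (K h _ (or_intror (or_intror (or_introl erefl)))).
  have [N4 L4] := @step_le _ _ _ X vs _ ( vp_stmt (keep h (SHavoc R Val vs))
                      (vp_stmt (keep w (SValidate R Var Val)) (vp_stmt (SSkip _ _ _) Y'))) HX N3
                   (K a _ (or_intror (or_introl erefl))).
  apply: (le_trans (L4 s)); apply: (le_trans (L3 s)); apply: (le_trans (L2 s)); exact: L1.
Qed.
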